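(* Let $\langle A, \leq, \otimes, \mathbf{1}\rangle$ be a finitely distributive semi-lattice monoid. Then $C'(A) = C(A)$, where $C'(A) = \{c \in A \mid \exists a,b \in A.\ a < b \wedge a \otimes c = b \otimes c\}$ and $C(A) = \{c \in A \mid \exists a,b\in A.\ a \neq b \wedge a \otimes c = b \otimes c\}$.
   Context: A semi-lattice monoid (SLM) is a structure $\langle A, \leq, \otimes, \mathbf{1}\rangle$ where $\langle A, \otimes, \mathbf{1}\rangle$ is a commutative monoid and $\langle A,\leq\rangle$ is a partial order in which every finite subset $X$ (including $\emptyset$) has a least upper bound $\bigvee X$. It is finitely distributive if $a \otimes \bigvee X = \bigvee\{a \otimes x \mid x \in X\}$ for every finite $X \subseteq A$ and every $a \in A$. $a<b$ means $a\leq b$ and $a\neq b$. *)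

(* Defs.v *)
From Stdlib Require Import List.
Import ListNotations.

Definition is_lub {A : Type} (le : A -> A -> Prop) (X : list A) (s : A) : Prop :=
  (forall x, In x X -> le x s) /\
  (forall u, (forall x, In x X -> le x u) -> le s u).

Record SLM : Type := {
  carrier :> Type;
  le : carrier -> carrier -> Prop;
  mul : carrier -> carrier -> carrier;
  one : carrier;
  sup : list carrier -> carrier;
  mul_assoc : forall a b c, mul a (mul b c) = mul (mul a b) c;
  mul_comm : forall a b, mul a b = mul b a;
  mul_one : forall a, mul a one = a;
  le_refl : forall a, le a a;
  le_trans : forall a b c, le a b -> le b c -> le a c;
  le_antisym : forall a b, le a b -> le b a -> a = b;
  sup_lub : forall X : list carrier, is_lub le X (sup X)
}.

Definition fin_distributive (S : SLM) : Prop :=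
  forall (a : S) (X : list S), mul S a (sup S X) = sup S (map (mul S a) X).

Definition lt (S : SLM) (a b : S) : Prop := le S a b /\ a <> b.

Definition Cprime (S : SLM) (c : S) : Prop :=
  exists a b : S, lt S a b /\ mul S a c = mul S b c.

Definition Cset (S : SLM) (c : S) : Prop :=
  exists a b : S, a <> b /\ mul S a c = mul S b c.

(* Main.v *)
Require Import Defs.
From Stdlib Require Import List Classical.
Import ListNotations.

Lemma sup_dup (S : SLM) (x : S) : sup S [x; x] = x.
Proof.
  destruct (sup_lub S [x; x]) as [H1 H2].
  apply le_antisym.
  - apply H2. intros y [<-|[<-|[]]]; apply le_refl.
  - apply H1. simpl; auto.
Qed.

Theorem lemma7 (S : SLM) (Hd : fin_distributive S) :
  forall c : S, Cprime S c <-> Cset S c.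
Proof.
  intros c; split.
  - intros [a [b [[_ Hab] He]]]. exists a, b. auto.
  - intros [a [b [Hab He]]].
    set (s := sup S [a; b]).
    assert (Hs : mul S s c = mul S a c).
    { unfold s. rewrite mul_comm, Hd. simpl.
      rewrite (mul_comm S c a), (mul_comm S c b), <- He. apply sup_dup. }
    destruct (sup_lub S [a; b]) as [H1 _].
    destruct (classic (a = s)) as [Ea|Na].
    + destruct (classic (b = s)) as [Eb|Nb].
      * exfalso; apply Hab; congruence.
      * exists b, s. split. split; [apply H1; simpl; auto|exact Nb].
        rewrite Hs; auto.
    + exists a, s. split. split; [apply H1; simpl; auto|exact Na].
      rewrite Hs; auto.
Qed.
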